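(* Let $a_1,a_2,a_3$ be the parameters of a pure three-mode Gaussian state in the standard form described below. Suppose that for every permutation $(i,j,k)$ of $(1,2,3)$, $$|a_i-a_j|+1<a_k<\sqrt{a_i^2+a_j^2-1}.$$ Then: (i) $a_k>\alpha_k$ for every $k=1,2,3$. (ii) For every choice of focus mode $i$, the residual tripartite Rényi-2 entanglement $$\mathcal E_2(\rho_{A_i:A_j:A_k})=\mathcal E_2(\rho_{A_i:A_jA_k})-\mathcal E_2(\rho_{A_i:A_j})-\mathcal E_2(\rho_{A_i:A_k})$$ equals $\tfrac12\ln\!\big(64a_1^2a_2^2a_3^2/\beta^2\big)$. In particular it does not depend on the choice of focus mode.
   Context: Any pure three-mode Gaussian state is, up to local unitaries, described by a covariance matrix $\boldsymbol\sigma_{A_1A_2A_3}$ in the following standard form. Its diagonal $2\times2$ blocks are $a_i\mathbf I$ for $i=1,2,3$. Its off-diagonal block between modes $A_j$ and $A_k$ is $\mathrm{diag}(c_i^+,c_i^-)$, where $\{i,j,k\}=\{1,2,3\}$. The coefficients are given by $$4\sqrt{a_ja_k}\,c_i^\pm=\sqrt{[(a_i-1)^2-(a_j-a_k)^2][(a_i+1)^2-(a_j-a_k)^2]}\pm\sqrt{[(a_i-1)^2-(a_j+a_k)^2][(a_i+1)^2-(a_j+a_k)^2]},$$ with $|a_j-a_k|+1\le a_i\le a_j+a_k-1$ for all permutations. The covariance matrix convention is $\sigma_{ij}=\langle \hat R_i\hat R_j+\hat R_j\hat R_i\rangle-2\langle\hat R_i\rangle\langle\hat R_j\rangle$. The Gaussian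 Rényi-2 entanglement is $\mathcal E_2(\rho_{X:Y})=\inf\tfrac12\ln\det\boldsymbol\gamma_X$. The infimum is over bona fide pure covariance matrices $\boldsymbol\gamma_{XY}$ (real symmetric, $\boldsymbol\gamma_{XY}+i\boldsymbol\Omega\ge0$, $\det\boldsymbol\gamma_{XY}=1$) with $\boldsymbol\gamma_{XY}\le\boldsymbol\sigma_{XY}$. For the pure state above, $\mathcal E_2(\rho_{A_i:A_jA_k})=\tfrac12\ln\det(a_i\mathbf I)=\ln a_i$. Known fact used as a standing input: the two-mode reduced entanglement is $\mathcal E_2(\rho_{A_i:A_j})=\tfrac12\ln g_k$, where - $g_k=1$ if $a_k\ge\sqrt{a_i^2+a_j^2-1}$; - $g_k=\beta/(8a_k^2)$ if $\alpha_k<a_k<\sqrt{a_i^2+a_j^2-1}$; - $g_k=\big((a_i^2-a_j^2)/(a_k^2-1)\big)^2$ if $a_k\le\alpha_k$. Here $$\alpha_k=\sqrt{\frac{2(a_i^2+a_j^2)+(a_i^2-a_j^2)^2+|a_i^2-a_j^2|\sqrt{(a_i^2-a_j^2)^2+8(a_i^2+a_j^2)}}{2(a_i^2+a_j^2)}},$$ $$\beta=2a_1^2+2a_2^2+2a_3^2+2a_1^2a_2^2+2a_1^2a_3^2+2a_2^2a_3^2-a_1^4-a_2^4-a_3^4-\sqrt\delta-1,$$ $$\delta=\prod_{\mu,\nu\in\{0,1\}}\big[(a_1+(-1)^\mu a_2+(-1)^\nu a_3)^2-1\big].$$ *)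

(* Defs.v *)
From Stdlib Require Import Reals Lra.
Open Scope R_scope.

(* Standard-form constraint for the local symplectic invariants of a pure
   three-mode Gaussian state: |a_j - a_k| + 1 <= a_i <= a_j + a_k - 1. *)
Definition sf_cond (ai aj ak : R) : Prop :=
  Rabs (aj - ak) + 1 <= ai /\ ai <= aj + ak - 1.

Definition standard_form (a1 a2 a3 : R) : Prop :=
  sf_cond a1 a2 a3 /\ sf_cond a2 a1 a3 /\ sf_cond a3 a1 a2 /\
  sf_cond a1 a3 a2 /\ sf_cond a2 a3 a1 /\ sf_cond a3 a2 a1.

(* alpha_k, with (i,j) the two other modes. *)
Definition alpha (ai aj : R) : R :=
  sqrt ((2 * (ai^2 + aj^2) + (ai^2 - aj^2)^2
         + Rabs (ai^2 - aj^2) * sqrt ((ai^2 - aj^2)^2 + 8 * (ai^2 + aj^2)))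
        / (2 * (ai^2 + aj^2))).

Definition delta (a1 a2 a3 : R) : R :=
  ((a1 + a2 + a3)^2 - 1) * ((a1 + a2 - a3)^2 - 1) *
  ((a1 - a2 + a3)^2 - 1) * ((a1 - a2 - a3)^2 - 1).

Definition beta (a1 a2 a3 : R) : R :=
  2*a1^2 + 2*a2^2 + 2*a3^2 + 2*a1^2*a2^2 + 2*a1^2*a3^2 + 2*a2^2*a3^2
  - a1^4 - a2^4 - a3^4 - sqrt (delta a1 a2 a3) - 1.

(* g_k for the reduced two-mode state of modes i, j (k = excluded mode). *)
Definition gk (ai aj ak : R) : R :=
  if Rle_dec (sqrt (ai^2 + aj^2 - 1)) ak then 1
  else if Rlt_dec (alpha ai aj) ak then beta ai aj ak / (8 * ak^2)
  else ((ai^2 - aj^2) / (ak^2 - 1))^2.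

(* E2(rho_{A_i:A_jA_k}) = ln a_i for the pure state. *)
Definition E2_one_two (ai : R) : R := ln ai.

(* E2(rho_{A_i:A_j}) = 1/2 ln g_k  (standing input), k the excluded mode. *)
Definition E2_pair (ai aj ak : R) : R := / 2 * ln (gk ai aj ak).

Definition E2_residual (ai aj ak : R) : R :=
  E2_one_two ai - E2_pair ai aj ak - E2_pair ai ak aj.

Definition hyp_cond (ai aj ak : R) : Prop :=
  Rabs (ai - aj) + 1 < ak /\ ak < sqrt (ai^2 + aj^2 - 1).

(* Main.v *)
Require Import Defs.
From Stdlib Require Import Reals.
From Stdlib Require Import Lra Psatz.
Open Scope R_scope.

Lemma sq_lt_of_lt_sqrt x t : 0 <= x -> x < sqrt t -> x^2 < t.
Proof.
  intros Hx H.
  destruct (Rle_dec t 0) as [Ht|Ht].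
  - rewrite sqrt_neg_0 in H by exact Ht. lra.
  - assert (E := sqrt_sqrt t ltac:(lra)).
    assert (0 <= sqrt t) by apply sqrt_pos. nra.
Qed.

Lemma alpha_lt x y z : 1 < x -> 1 < y -> 0 < z ->
  x^2 < y^2+z^2-1 -> y^2 < x^2+z^2-1 -> alpha x y < z.
Proof.
  intros Hx Hy Hz H1 H2. unfold alpha.
  set (d := x^2 - y^2). set (s := x^2 + y^2).
  assert (Hs : s > 2) by (unfold s; nra).
  assert (Hr0 : 0 <= sqrt (d^2 + 8*s)) by apply sqrt_pos.
  assert (Hr2 : sqrt (d^2 + 8*s) * sqrt (d^2 + 8*s) = d^2 + 8*s)
    by (apply sqrt_sqrt; nra).
  set (r := sqrt (d^2 + 8*s)) in *.
  assert (HD0 : 0 <= Rabs d) by apply Rabs_pos.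
  assert (HD2 : Rabs d ^ 2 = d^2) by apply pow2_abs.
  set (D := Rabs d) in *.
  assert (HDu : D < z^2 - 1).
  { unfold D, Rabs; destruct (Rcase_abs d); unfold d in *; lra. }
  assert (HsD : s - D > 2).
  { unfold D, Rabs; destruct (Rcase_abs d); unfold d, s in *; nra. }
  set (L := 2*s*(z^2-1) - d^2).
  assert (HL : L > D*(2*s-D)) by (unfold L; rewrite <- HD2; nra).
  assert (HL0 : L > 0) by nra.
  assert (HLsq : (D*r)^2 < L^2).
  { destruct (Req_dec D 0) as [E|E].
    - rewrite E. nra.
    - assert (D > 0) by lra.
      assert (HX : 0 <= D*(2*s-D)) by nra.
      assert (L^2 > (D*(2*s-D))^2).
      { assert (0 < (L - D*(2*s-D))*(L + D*(2*s-D))) by (apply Rmult_lt_0_compat; lra). nra. }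
      assert ((D*(2*s-D))^2 >= (D*r)^2).
      { replace ((D*r)^2) with (D^2 * (r*r)) by ring. rewrite Hr2.
        rewrite <- HD2. nra. }
      lra. }
  assert (Hcore : D * r < L).
  { destruct (Rlt_le_dec (D*r) L) as [h|h]; [exact h|].
    assert (0 <= D*r) by nra. nra. }
  rewrite <- (sqrt_pow2 z) by lra.
  apply sqrt_lt_1_alt. split.
  - apply Rmult_le_pos; [|apply Rlt_le, Rinv_0_lt_compat; lra].
    assert (0 <= D*r) by nra. nra.
  - apply (Rmult_lt_reg_r (2*s)); [lra|].
    unfold Rdiv. rewrite Rmult_assoc, Rinv_l by lra. rewrite Rmult_1_r.
    unfold L in Hcore. nra.
Qed.

Lemma beta_sym12 x y z : beta y x z = beta x y z.
Proof.
  assert (H : delta y x z = delta x y z) by (unfold delta; ring).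
  unfold beta. rewrite H. ring.
Qed.

Lemma beta_sym23 x y z : beta x z y = beta x y z.
Proof.
  assert (H : delta x z y = delta x y z) by (unfold delta; ring).
  unfold beta. rewrite H. ring.
Qed.

Lemma beta_pos a b c : 1 <= a -> 1 <= b -> 1 <= c ->
  1 <= a + b - c -> 1 <= a - b + c -> 1 <= -a + b + c -> 0 < beta a b c.
Proof.
  intros Ha Hb Hc H1 H2 H3.
  set (P := 2*a^2 + 2*b^2 + 2*c^2 + 2*a^2*b^2 + 2*a^2*c^2 + 2*b^2*c^2
            - a^4 - b^4 - c^4 - 1).
  assert (HP : P = (a+b+c)*(-a+b+c)*(a-b+c)*(a+b-c) + 2*(a^2+b^2+c^2) - 1)
    by (unfold P; ring).
  assert (HH : 0 < (a+b+c)*(-a+b+c)*(a-b+c)*(a+b-c)).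
  { repeat apply Rmult_lt_0_compat; lra. }
  assert (HP0 : 0 < P) by nra.
  assert (Hd : delta a b c = P^2 - 64*a^2*b^2*c^2) by (unfold delta, P; ring).
  assert (Hb2 : beta a b c = P - sqrt (delta a b c)) by (unfold beta, P; ring).
  rewrite Hb2.
  destruct (Rle_dec (delta a b c) 0) as [E|E].
  - rewrite sqrt_neg_0 by exact E. lra.
  - assert (Hs := sqrt_sqrt (delta a b c) ltac:(lra)).
    assert (0 <= sqrt (delta a b c)) by apply sqrt_pos.
    assert (0 < a^2*b^2*c^2) by (repeat apply Rmult_lt_0_compat; nra).
    destruct (Rlt_le_dec (sqrt (delta a b c)) P) as [h|h]; [lra|].
    nra.
Qed.

Lemma final_ln a b g h : 0 < a -> 0 < b -> 0 < g -> 0 < h ->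
  ln a - / 2 * ln (b / (8 * g^2)) - / 2 * ln (b / (8 * h^2))
  = / 2 * ln (64 * a^2 * g^2 * h^2 / b^2).
Proof.
  intros Ha Hb Hg Hh.
  assert (P1 : 0 < b / (8 * g^2)) by (apply Rdiv_lt_0_compat; nra).
  assert (P2 : 0 < b / (8 * h^2)) by (apply Rdiv_lt_0_compat; nra).
  replace (64 * a^2 * g^2 * h^2 / b^2)
    with (a^2 * (/ (b / (8 * g^2)) * / (b / (8 * h^2))))
    by (field; lra).
  rewrite ln_mult, ln_mult, ln_Rinv, ln_Rinv, ln_pow; try lra;
    try apply pow_lt; try apply Rmult_lt_0_compat; try apply Rinv_0_lt_compat; try lra.
  simpl INR. lra.
Qed.

Lemma gk_mid x y z : hyp_cond x y z -> alpha x y < z -> gk x y z = beta x y z / (8 * z^2).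
Proof.
  intros [_ H] Ha. unfold gk.
  destruct (Rle_dec (sqrt (x^2+y^2-1)) z); [lra|].
  destruct (Rlt_dec (alpha x y) z); [reflexivity|lra].
Qed.

Lemma hyp_sq x y z : hyp_cond x y z -> z^2 < x^2 + y^2 - 1 /\ 1 < z.
Proof.
  intros [H1 H2]. assert (0 <= Rabs (x-y)) by apply Rabs_pos.
  split; [apply sq_lt_of_lt_sqrt; lra | lra].
Qed.

Theorem mainTheorem8 (a1 a2 a3 : R) :
  standard_form a1 a2 a3 ->
  hyp_cond a1 a2 a3 -> hyp_cond a2 a1 a3 ->
  hyp_cond a1 a3 a2 -> hyp_cond a3 a1 a2 ->
  hyp_cond a2 a3 a1 -> hyp_cond a3 a2 a1 ->
  (a3 > alpha a1 a2 /\ a2 > alpha a1 a3 /\ a1 > alpha a2 a3) /\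
  (E2_residual a1 a2 a3
     = / 2 * ln (64 * a1^2 * a2^2 * a3^2 / (beta a1 a2 a3)^2) /\
   E2_residual a2 a1 a3
     = / 2 * ln (64 * a1^2 * a2^2 * a3^2 / (beta a1 a2 a3)^2) /\
   E2_residual a3 a1 a2
     = / 2 * ln (64 * a1^2 * a2^2 * a3^2 / (beta a1 a2 a3)^2)).
Proof.
  intros Hsf H123 H213 H132 H312 H231 H321.
  destruct (hyp_sq _ _ _ H123) as [s3 g3].
  destruct (hyp_sq _ _ _ H132) as [s2 g2].
  destruct (hyp_sq _ _ _ H231) as [s1 g1].
  assert (A3 : alpha a1 a2 < a3) by (apply alpha_lt; lra).
  assert (A3' : alpha a2 a1 < a3) by (apply alpha_lt; lra).
  assert (A2 : alpha a1 a3 < a2) by (apply alpha_lt; lra).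
  assert (A2' : alpha a3 a1 < a2) by (apply alpha_lt; lra).
  assert (A1 : alpha a2 a3 < a1) by (apply alpha_lt; lra).
  assert (A1' : alpha a3 a2 < a1) by (apply alpha_lt; lra).
  destruct Hsf as [[_ c1] [[_ c2] [[_ c3] _]]].
  assert (Bp : 0 < beta a1 a2 a3) by (apply beta_pos; lra).
  split; [lra|].
  unfold E2_residual, E2_one_two, E2_pair.
  rewrite (gk_mid _ _ _ H123 A3), (gk_mid _ _ _ H132 A2),
          (gk_mid _ _ _ H213 A3'), (gk_mid _ _ _ H231 A1),
          (gk_mid _ _ _ H312 A2'), (gk_mid _ _ _ H321 A1').
  assert (B1 : beta a1 a3 a2 = beta a1 a2 a3) by apply beta_sym23.
  assert (B2 : beta a2 a1 a3 = beta a1 a2 a3) by apply beta_sym12.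
  assert (B3 : beta a2 a3 a1 = beta a1 a2 a3) by (rewrite beta_sym23; apply beta_sym12).
  assert (B4 : beta a3 a1 a2 = beta a1 a2 a3) by (rewrite beta_sym12; apply beta_sym23).
  assert (B5 : beta a3 a2 a1 = beta a1 a2 a3) by (rewrite beta_sym23; exact B4).
  rewrite B1, B2, B3, B4, B5.
  split; [|split].
  - rewrite final_ln by lra. replace (64 * a1 ^ 2 * a3 ^ 2 * a2 ^ 2) with (64 * a1 ^ 2 * a2 ^ 2 * a3 ^ 2) by ring; reflexivity.
  - rewrite final_ln by lra. replace (64 * a2 ^ 2 * a3 ^ 2 * a1 ^ 2) with (64 * a1 ^ 2 * a2 ^ 2 * a3 ^ 2) by ring; reflexivity.
  - rewrite final_ln by lra. replace (64 * a3 ^ 2 * a2 ^ 2 * a1 ^ 2) with (64 * a1 ^ 2 * a2 ^ 2 * a3 ^ 2) by ring; reflexivity.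
Qed.
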